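(* Fix an integer $L\ge 2$, parameters $w_1,w_2,\alpha>0$, $f_1,f_2\in\mathbb{R}$ with $|f_i|\le w_i$, and $\gamma\in\mathbb{R}$ with $|\gamma|\le\alpha$. For all $\rho_1,\rho_2\ge 0$, the product probability measure on $(\mathbb{N}_0^2)^{\mathbb{Z}_L}$ under which all $n^1_k,n^2_k$ ($k\in\mathbb{Z}_L$) are independent, with $n^1_k\sim\mathrm{Poisson}(\rho_1)$ and $n^2_k\sim\mathrm{Poisson}(\rho_2)$, i.e. $$\mu(\eta)=\prod_{k\in\mathbb{Z}_L}\frac{\rho_1^{n^1_k}e^{-\rho_1}}{n^1_k!}\,\frac{\rho_2^{n^2_k}e^{-\rho_2}}{n^2_k!},$$ is an invariant (stationary) measure of the two-lane lattice gas defined in the context. It is also translation invariant.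
   Context: Two-lane lattice gas on the discrete torus $\mathbb{Z}_L=\mathbb{Z}/L\mathbb{Z}$. A configuration is $\eta=(n^1_k,n^2_k)_{k\in\mathbb{Z}_L}\in(\mathbb{N}_0^2)^{\mathbb{Z}_L}$, where $n^i_k$ is the number of particles of lane $i\in\{1,2\}$ at site $k$. Parameters: $w_1,w_2,\alpha>0$, $f_1,f_2\in\mathbb{R}$ with $|f_i|\le w_i$, $\gamma\in\mathbb{R}$ with $|\gamma|\le\alpha$. Set $r_i=\tfrac12(w_i+f_i)$, $\ell_i=\tfrac12(w_i-f_i)$, $g^\pm=\tfrac12(\alpha\pm\gamma)$ (all nonnegative), and $\bar n^i_k=\tfrac12(n^i_k+n^i_{k+1})$. The process is the continuous-time Markov chain in which, for each $k\in\mathbb{Z}_L$: one lane-1 particle moves from $k$ to $k+1$ at rate $n^1_k\,(r_1+g^+\bar n^2_k)$; one lane-1 particle moves from $k+1$ to $k$ at rate $n^1_{k+1}\,(\ell_1+g^-\bar n^2_k)$; one lane-2 particle moves from $k$ to $k+1$ at rate $n^2_k\,(r_2+g^+\bar n^1_k)$; one lane-2 particle moves from $k+1$ to $k$ at rate $n^2_{k+1}\,(\ell_2+g^-\bar n^1_k)$. (Thus each particle jumps independently of the other particles of its own lane, with rates depending on the occupation of the other lane on the same pair of sites.) A measure is invariant if it is stationary under this dynamics. *)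

(* Defs.v *)
From Stdlib Require Import Reals Lra Arith.
Open Scope R_scope.

Inductive lane := L1 | L2.

Definition other (i : lane) : lane := match i with L1 => L2 | L2 => L1 end.

Definition lane_eqb (i j : lane) : bool :=
  match i, j with L1, L1 | L2, L2 => true | _, _ => false end.

(* A configuration: eta i k = n^i_k, number of lane-i particles at site k.
   Sites of Z_L are represented by 0..L-1; values at k >= L are never used. *)
Definition config := lane -> nat -> nat.

Definition nxt (L k : nat) : nat := Nat.modulo (S k) L.

Record params := mkParams { w1 : R; w2 : R; f1 : R; f2 : R; alpha : R; gamma : R }.

Definition w (p : params) (i : lane) : R := match i with L1 => w1 p | L2 => w2 p end.
Definition f (p : params) (i : lane) : R := match i with L1 => f1 p | L2 => f2 p end.
Definition rr (p : params) (i : lane) : R := (w p i + f p i) / 2.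
Definition ll (p : params) (i : lane) : R := (w p i - f p i) / 2.
Definition gp (p : params) : R := (alpha p + gamma p) / 2.
Definition gm (p : params) : R := (alpha p - gamma p) / 2.

Definition nbar (L : nat) (eta : config) (i : lane) (k : nat) : R :=
  (INR (eta i k) + INR (eta i (nxt L k))) / 2.

Definition upd (eta : config) (i : lane) (k : nat) (v : nat) : config :=
  fun j m => if andb (lane_eqb j i) (Nat.eqb m k) then v else eta j m.

Definition move (eta : config) (i : lane) (a b : nat) : config :=
  upd (upd eta i a (eta i a - 1)%nat) i b (eta i b + 1)%nat.

(* Transitions are labelled by (lane i, bond k, direction). *)
Inductive dir := Right | Left.

Definition src (L : nat) (d : dir) (k : nat) : nat :=
  match d with Right => k | Left => nxt L k end.
Definition dst (L : nat) (d : dir) (k : nat) : nat :=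
  match d with Right => nxt L k | Left => k end.

Definition rate (p : params) (L : nat) (eta : config) (i : lane) (k : nat) (d : dir) : R :=
  match d with
  | Right => INR (eta i k) * (rr p i + gp p * nbar L eta (other i) k)
  | Left  => INR (eta i (nxt L k)) * (ll p i + gm p * nbar L eta (other i) k)
  end.

Definition target (L : nat) (eta : config) (i : lane) (k : nat) (d : dir) : config :=
  move eta i (src L d k) (dst L d k).

Fixpoint sumk (n : nat) (F : nat -> R) : R :=
  match n with O => 0 | S m => sumk m F + F m end.
Fixpoint prodk (n : nat) (F : nat -> R) : R :=
  match n with O => 1 | S m => prodk m F * F m end.

Definition sum_labels (L : nat) (F : lane -> nat -> dir -> R) : R :=
  sumk L (fun k => F L1 k Right + F L1 k Left + F L2 k Right + F L2 k Left).

Definition out_rate (p : params) (L : nat) (eta : config) : R :=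
  sum_labels L (fun i k d => rate p L eta i k d).

(* Probability flux into eta under the weight mu: sum over labels l and over
   the (unique, if it exists) configuration eta' with target eta' l = eta,
   namely eta' = eta with one lane-i particle moved back from dst to src;
   it exists iff eta has a lane-i particle at dst. *)
Definition in_flux (p : params) (L : nat) (mu : config -> R) (eta : config) : R :=
  sum_labels L (fun i k d =>
    if Nat.leb 1 (eta i (dst L d k)) then
      let eta' := move eta i (dst L d k) (src L d k) in
      mu eta' * rate p L eta' i k d
    else 0).

(* Invariance (stationarity) of mu: global balance / master equation
   d/dt mu_t(eta) = in_flux - mu(eta) * out_rate = 0 for every configuration. *)
Definition invariant (p : params) (L : nat) (mu : config -> R) : Prop :=
  forall eta : config, in_flux p L mu eta = mu eta * out_rate p L eta.

Definition shift (L : nat) (eta : config) : config := fun i k => eta i (nxt L k).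

Definition translation_invariant (L : nat) (mu : config -> R) : Prop :=
  forall eta : config, mu (shift L eta) = mu eta.

Definition poisson (rho : R) (n : nat) : R := rho ^ n * exp (- rho) / INR (fact n).

Definition poisson_product (L : nat) (rho1 rho2 : R) (eta : config) : R :=
  prodk L (fun k => poisson rho1 (eta L1 k) * poisson rho2 (eta L2 k)).

(* Main.v *)
Require Import Defs.
From Stdlib Require Import Reals Lra Lia Arith.
Open Scope R_scope.

Lemma sumk_ext n F G : (forall k, (k < n)%nat -> F k = G k) -> sumk n F = sumk n G.
Proof. induction n; intros H; simpl; [reflexivity|]. rewrite IHn by (intros; apply H; lia). rewrite H by lia. reflexivity. Qed.

Lemma prodk_ext n F G : (forall k, (k < n)%nat -> F k = G k) -> prodk n F = prodk n G.
Proof. induction n; intros H; simpl; [reflexivity|]. rewrite IHn by (intros; apply H; lia). rewrite H by lia. reflexivity. Qed.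

Lemma sumk_plus n F G : sumk n (fun k => F k + G k) = sumk n F + sumk n G.
Proof. induction n; simpl; [ring|]. rewrite IHn; ring. Qed.
Lemma sumk_minus n F G : sumk n (fun k => F k - G k) = sumk n F - sumk n G.
Proof. induction n; simpl; [ring|]. rewrite IHn; ring. Qed.
Lemma sumk_scal n c F : sumk n (fun k => c * F k) = c * sumk n F.
Proof. induction n; simpl; [ring|]. rewrite IHn; ring. Qed.

Lemma sumk_shift m F : sumk (S m) F = F 0%nat + sumk m (fun k => F (S k)).
Proof. induction m; simpl in *; [ring|]. rewrite IHm. ring. Qed.
Lemma prodk_shift m F : prodk (S m) F = F 0%nat * prodk m (fun k => F (S k)).
Proof. induction m; simpl in *; [ring|]. rewrite IHm. ring. Qed.

Lemma sumk_nxt L h : (1 <= L)%nat -> sumk L (fun k => h (nxt L k)) = sumk L h.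
Proof.
  intros HL. destruct L as [|m]; [lia|].
  rewrite (sumk_shift m h).
  change (sumk (S m) (fun k => h (nxt (S m) k))) with (sumk m (fun k => h (nxt (S m) k)) + h (nxt (S m) m)).
  replace (nxt (S m) m) with 0%nat by (unfold nxt; symmetry; apply Nat.Div0.mod_same).
  rewrite (sumk_ext m _ (fun k => h (S k))).
  - ring.
  - intros k Hk. unfold nxt. rewrite Nat.mod_small by lia. reflexivity.
Qed.

Lemma prodk_nxt L h : (1 <= L)%nat -> prodk L (fun k => h (nxt L k)) = prodk L h.
Proof.
  intros HL. destruct L as [|m]; [lia|].
  rewrite (prodk_shift m h).
  change (prodk (S m) (fun k => h (nxt (S m) k))) with (prodk m (fun k => h (nxt (S m) k)) * h (nxt (S m) m)).
  replace (nxt (S m) m) with 0%nat by (unfold nxt; symmetry; apply Nat.Div0.mod_same).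
  rewrite (prodk_ext m _ (fun k => h (S k))).
  - ring.
  - intros k Hk. unfold nxt. rewrite Nat.mod_small by lia. reflexivity.
Qed.

Lemma prodk_pick n F a : (a < n)%nat ->
  prodk n F = F a * prodk n (fun j => if Nat.eqb j a then 1 else F j).
Proof.
  induction n; intros Ha; [lia|]. simpl.
  destruct (Nat.eq_dec a n) as [->|Hne].
  - rewrite Nat.eqb_refl.
    rewrite (prodk_ext n (fun j => if Nat.eqb j n then 1 else F j) F).
    + ring.
    + intros k Hk. destruct (Nat.eqb_spec k n); [lia|reflexivity].
  - rewrite IHn by lia. destruct (Nat.eqb_spec n a); [lia|]. ring.
Qed.

Lemma sumk_telescope L F G H : (1 <= L)%nat ->
  (forall k, (k < L)%nat -> F k = G k + (H (nxt L k) - H k)) -> sumk L F = sumk L G.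
Proof.
  intros HL E. rewrite (sumk_ext L F _ E), sumk_plus, sumk_minus, sumk_nxt by exact HL. ring.
Qed.

Lemma sum_labels_ext L F G : (forall i k d, (k < L)%nat -> F i k d = G i k d) ->
  sum_labels L F = sum_labels L G.
Proof. intros E. unfold sum_labels. apply sumk_ext. intros k Hk. rewrite !E by exact Hk. reflexivity. Qed.

Lemma sum_labels_scal L c F : sum_labels L (fun i k d => c * F i k d) = c * sum_labels L F.
Proof. unfold sum_labels. rewrite <- sumk_scal. apply sumk_ext. intros. ring. Qed.

Definition cc (p : params) (L : nat) (eta : config) (i : lane) (k : nat) (d : dir) : R :=
  match d with
  | Right => rr p i + gp p * nbar L eta (other i) k
  | Left => ll p i + gm p * nbar L eta (other i) k
  end.

Lemma rate_eq p L eta i k d : rate p L eta i k d = INR (eta i (src L d k)) * cc p L eta i k d.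
Proof. destruct d; reflexivity. Qed.

Lemma nbar_move L eta i a b k : nbar L (move eta i a b) (other i) k = nbar L eta (other i) k.
Proof. destruct i; reflexivity. Qed.

Lemma cc_move p L eta i a b k d : cc p L (move eta i a b) i k d = cc p L eta i k d.
Proof. destruct d; unfold cc; rewrite nbar_move; reflexivity. Qed.

Lemma poisson_S rho n : poisson rho (S n) * INR (S n) = rho * poisson rho n.
Proof.
  unfold poisson. change (fact (S n)) with (S n * fact n)%nat. rewrite mult_INR.
  simpl pow. field. split; [apply INR_fact_neq_0|]. apply not_0_INR. lia.
Qed.

Definition Qf (rho1 rho2 : R) (i : lane) : nat -> R :=
  match i with L1 => poisson rho1 | L2 => poisson rho2 end.
Definition rh (rho1 rho2 : R) (i : lane) : R := match i with L1 => rho1 | L2 => rho2 end.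
Definition Gf (rho1 rho2 : R) (eta : config) (j : nat) : R :=
  poisson rho1 (eta L1 j) * poisson rho2 (eta L2 j).

Lemma Gf_split rho1 rho2 eta i j :
  Gf rho1 rho2 eta j = Qf rho1 rho2 i (eta i j) * Qf rho1 rho2 (other i) (eta (other i) j).
Proof. destruct i; unfold Gf; simpl; ring. Qed.

Lemma Qf_S rho1 rho2 i n : Qf rho1 rho2 i (S n) * INR (S n) = rh rho1 rho2 i * Qf rho1 rho2 i n.
Proof. destruct i; apply poisson_S. Qed.

Lemma nxt_lt L k : (1 <= L)%nat -> (nxt L k < L)%nat.
Proof. intros. unfold nxt. apply Nat.mod_upper_bound. lia. Qed.

Lemma nxt_neq L k : (2 <= L)%nat -> (k < L)%nat -> nxt L k <> k.
Proof.
  intros HL Hk. unfold nxt. destruct (Nat.eq_dec (S k) L) as [<-|Hn].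
  - rewrite Nat.Div0.mod_same. lia.
  - rewrite Nat.mod_small by lia. lia.
Qed.

Lemma move_other eta i a b l j : j <> a -> j <> b -> move eta i a b l j = eta l j.
Proof.
  intros Ha Hb. unfold move, upd.
  destruct (lane_eqb l i); simpl; [|reflexivity].
  destruct (Nat.eqb_spec j b); [lia|]. destruct (Nat.eqb_spec j a); [lia|]. reflexivity.
Qed.

Lemma lane_eqb_refl i : lane_eqb i i = true.
Proof. destruct i; reflexivity. Qed.
Lemma lane_eqb_other i : lane_eqb (other i) i = false.
Proof. destruct i; reflexivity. Qed.

Lemma influx_term L p rho1 rho2 eta i k d : (2 <= L)%nat -> (k < L)%nat ->
  (if Nat.leb 1 (eta i (dst L d k)) then
      let eta' := move eta i (dst L d k) (src L d k) in
      poisson_product L rho1 rho2 eta' * rate p L eta' i k d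
    else 0)
  = poisson_product L rho1 rho2 eta * (INR (eta i (dst L d k)) * cc p L eta i k d).
Proof.
  intros HL Hk.
  set (D := dst L d k). set (S0 := src L d k).
  assert (HD : (D < L)%nat) by (unfold D; destruct d; simpl; auto using nxt_lt with arith).
  assert (HS : (S0 < L)%nat) by (unfold S0; destruct d; simpl; auto using nxt_lt with arith).
  assert (HDS : D <> S0) by (unfold D, S0; destruct d; simpl;
     [apply nxt_neq; auto | intro E; symmetry in E; revert E; apply nxt_neq; auto]).
  destruct (eta i D) as [|m] eqn:Em.
  - simpl. ring.
  - simpl (Nat.leb 1 (S m)). cbv zeta.
    rewrite rate_eq, cc_move. fold S0.
    set (eta' := move eta i D S0).
    assert (E1 : eta' i S0 = S (eta i S0)).
    { unfold eta', move, upd. rewrite lane_eqb_refl, Nat.eqb_refl. simpl. lia. }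
    assert (E2 : eta' i D = m).
    { unfold eta', move, upd. rewrite lane_eqb_refl, Nat.eqb_refl.
      destruct (Nat.eqb_spec D S0); [lia|]. simpl. rewrite Em. lia. }
    assert (E3 : forall j, eta' (other i) j = eta (other i) j).
    { intros j. unfold eta', move, upd. rewrite lane_eqb_other. reflexivity. }
    unfold poisson_product. fold (Gf rho1 rho2 eta') (Gf rho1 rho2 eta).
    rewrite (prodk_pick L (Gf rho1 rho2 eta') S0 HS).
    rewrite (prodk_pick L (Gf rho1 rho2 eta) S0 HS).
    rewrite (prodk_pick L (fun j => if Nat.eqb j S0 then 1 else Gf rho1 rho2 eta' j) D HD).
    rewrite (prodk_pick L (fun j => if Nat.eqb j S0 then 1 else Gf rho1 rho2 eta j) D HD).
    destruct (Nat.eqb_spec D S0); [lia|].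
    set (R0 := prodk L _) at 2.
    rewrite (prodk_ext L _ (fun j => if Nat.eqb j D then 1 else if Nat.eqb j S0 then 1 else Gf rho1 rho2 eta j)).
    2:{ intros j Hj. destruct (Nat.eqb_spec j D); [reflexivity|].
        destruct (Nat.eqb_spec j S0); [reflexivity|].
        unfold Gf, eta'. rewrite !move_other by auto. reflexivity. }
    fold R0.
    rewrite !(Gf_split rho1 rho2 _ i), E1, E2, !E3, Em.
    set (c := cc p L eta i k d).
    set (qS := Qf rho1 rho2 (other i) (eta (other i) S0)).
    set (qD := Qf rho1 rho2 (other i) (eta (other i) D)).
    pose proof (Qf_S rho1 rho2 i (eta i S0)) as H1.
    pose proof (Qf_S rho1 rho2 i m) as H2.
    transitivity (R0 * qS * qD * c * Qf rho1 rho2 i m *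
       (Qf rho1 rho2 i (S (eta i S0)) * INR (S (eta i S0)))); [ring|].
    rewrite H1.
    transitivity (R0 * qS * qD * c * Qf rho1 rho2 i (eta i S0) *
       (rh rho1 rho2 i * Qf rho1 rho2 i m)); [ring|].
    rewrite <- H2. ring.
Qed.

Lemma balance L p eta : (1 <= L)%nat ->
  sum_labels L (fun i k d => INR (eta i (dst L d k)) * cc p L eta i k d) =
  sum_labels L (fun i k d => INR (eta i (src L d k)) * cc p L eta i k d).
Proof.
  intros HL. unfold sum_labels.
  apply sumk_telescope with
    (H := fun j => INR (eta L1 j) * (rr p L1 - ll p L1) + INR (eta L2 j) * (rr p L2 - ll p L2)
                   + (gp p - gm p) * INR (eta L1 j) * INR (eta L2 j)); [exact HL|].
  intros k Hk. cbv beta iota delta [cc nbar dst src other]. generalize (INR (eta L1 k)) (INR (eta L1 (nxt L k))) (INR (eta L2 k)) (INR (eta L2 (nxt L k))) (rr p L1) (rr p L2) (ll p L1) (ll p L2) (gp p) (gm p). intros. field.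
Qed.

Theorem proposition2 (L : nat) (p : params) (rho1 rho2 : R) :
  (2 <= L)%nat ->
  0 < w1 p -> 0 < w2 p -> 0 < alpha p ->
  Rabs (f1 p) <= w1 p -> Rabs (f2 p) <= w2 p -> Rabs (gamma p) <= alpha p ->
  0 <= rho1 -> 0 <= rho2 ->
  invariant p L (poisson_product L rho1 rho2) /\
  translation_invariant L (poisson_product L rho1 rho2).
Proof.
  intros HL _ _ _ _ _ _ _ _. split.
  - intros eta. unfold in_flux, out_rate.
    rewrite (sum_labels_ext L _ (fun i k d => poisson_product L rho1 rho2 eta *
        (INR (eta i (dst L d k)) * cc p L eta i k d))).
    2:{ intros i k d Hk. apply influx_term; assumption. }
    rewrite (sum_labels_ext L (fun i k d => rate p L eta i k d)
        (fun i k d => INR (eta i (src L d k)) * cc p L eta i k d)).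
    2:{ intros i k d Hk. apply rate_eq. }
    rewrite sum_labels_scal, balance by lia. reflexivity.
  - intros eta. unfold poisson_product, shift.
    apply (prodk_nxt L (fun k => poisson rho1 (eta L1 k) * poisson rho2 (eta L2 k))). lia.
Qed.
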